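(* In the setting described in the context, suppose there is an integer $\omega>0$ such that for every $k$ and every $\nu>0$, $k\in\mathcal A_\nu\cup\mathcal A_{\nu-1}\cup\cdots\cup\mathcal A_{\max\{\nu-\omega+1,0\}}$, and such that for every $\phi>0$ and $k\in\mathcal A_\phi$, $\max\{\phi-\omega,0\}\le\bar\phi_k<\phi$. Then for every $\nu\ge1$, $$\sum_{\phi=1}^{\nu}\sum_{k\in\mathcal A_\phi}\|z_k^{\bar\phi_k+1}-z_k^{\phi}\|^2\le 2(\omega-1)^2\sum_{\phi=1}^{\nu}\|z^{\phi+1}-z^{\phi}\|^2.$$
   Context: There are $K$ workers. $\mathcal N_k$ is the set of neighbors of worker $k$ and $\mathcal T$ the set of pairs of neighboring workers. Worker $k$ owns $x_k$, an auxiliary variable $z_k=\{z_{k,l}:l\in\mathcal N_k\}$ and multipliers $\lambda_k$ split into blocks $\lambda_{k,l}$; $A_k$ is a matrix and $A_{k,l}$ the block of rows of $A_k$ corresponding to $z_{k,l}$; $z$ denotes the collection of all $z_k$. $F_k=f_k+\eta_{\mathcal X_k}$ with $\eta_S$ the indicator function of $S$. $\mathcal Z=\{z:z_{k,l}=z_{l,k}\ \forall(k,l)\in\mathcal T\}$. Asynchronous ADMM (global view) with parameters $\rho>0$, $\alpha\ge0$: start from $x^0$, $\lambda^0=0$, $z^0\in\mathcal Z$. At global iteration $\phi$ there is a subset $\mathcal A_\phi\subseteq\{1,\dots,K\}$ of workers finishing an $x$-update, and for $k\in\mathcal A_\phi$ an index $\bar\phi_k<\phi$ (the global iteration at which that update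 started). For $k\in\mathcal A_\phi$: $x_k^{\phi+1}\in\operatorname{argmin}_{x_k}F_k(x_k)+\lambda_k^{\phi\top}A_kx_k+\frac\rho2\|A_kx_k-z_k^{\bar\phi_k+1}\|^2$ and $\lambda_k^{\phi+1}=\lambda_k^\phi+\rho(A_kx_k^{\phi+1}-z_k^{\bar\phi_k+1})$; for $k\notin\mathcal A_\phi$ they are unchanged. For a set $\mathcal E_\phi$ of ordered neighbor pairs $(l,k)$, and all $k\in\mathcal A_\phi$, $l\in\mathcal N_k$ with $(l,k)\in\mathcal E_\phi$: $z_{k,l}^{\phi+1}=z_{l,k}^{\phi+1}=\big(\lambda_{k,l}^{\phi+1}+\lambda_{l,k}^{\phi+1}+\rho A_{k,l}x_k^{\phi+1}+\rho A_{l,k}x_l^{\phi+1}+\alpha z_{k,l}^\phi\big)/(2\rho+\alpha)$; all other entries of $z$ are unchanged. *)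

(* Defs.v *)
From HB Require Import structures.
From mathcomp Require Import all_boot all_order all_algebra.
Set Implicit Arguments. Unset Strict Implicit. Unset Printing Implicit Defensive.
Import Order.TTheory GRing.Theory Num.Theory.
Local Open Scope ring_scope.

Definition dotv (R : realFieldType) (p : nat) (u v : 'cV[R]_p) : R :=
  \sum_(i < p) u i 0 * v i 0.
Definition sqn (R : realFieldType) (p : nat) (v : 'cV[R]_p) : R := dotv v v.

(* Worker k has
   x_k : 'cV_(n k); the block z_{k,l}, lambda_{k,l} (l a neighbor of k) lives in
   'cV_(m k l), with m k l = m l k (hm) so that the consensus z_{k,l} = z_{l,k}
   makes sense (via castmx).  A_{k,l} : 'M_(m k l, n k) is the block of rows of
   A_k corresponding to z_{k,l}; so A_k x_k, lambda_k^T A_k x_k and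
   ||A_k x_k - z_k||^2 are written blockwise as sums over l in N_k. *)
Section ADMM.
Variables (R : realFieldType) (K : nat) (n : 'I_K -> nat)
  (m : 'I_K -> 'I_K -> nat) (hm : forall k l, m l k = m k l)
  (N : rel 'I_K) (Amat : forall k l, 'M[R]_(m k l, n k)).

Definition swapv (k l : 'I_K) (v : 'cV[R]_(m l k)) : 'cV[R]_(m k l) :=
  castmx (hm k l, erefl 1%N) v.

Definition in_Z (z : forall k l : 'I_K, 'cV[R]_(m k l)) : Prop :=
  forall k l, N k l -> z k l = swapv (z l k).

Definition sqn_blocks (k : 'I_K) (u : forall l : 'I_K, 'cV[R]_(m k l)) : R :=
  \sum_(l | N k l) sqn (u l).

Definition sqn_diff (z1 z2 : forall k l : 'I_K, 'cV[R]_(m k l)) : R :=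
  \sum_(k : 'I_K) sqn_blocks (fun l => z1 k l - z2 k l).

(* The x_k-subproblem objective
   F_k(y) + lambda_k^T A_k y + rho/2 ||A_k y - zk||^2 with F_k = f_k + indicator X_k
   (the indicator is handled by restricting to y in X_k). *)
Definition xobj (f : forall k, 'cV[R]_(n k) -> R) (rho : R) (k : 'I_K)
  (lamk zk : forall l : 'I_K, 'cV[R]_(m k l)) (y : 'cV[R]_(n k)) : R :=
  f k y + \sum_(l | N k l) dotv (lamk l) (Amat k l *m y)
  + rho / 2 * \sum_(l | N k l) sqn (Amat k l *m y - zk l).

Definition is_argminF (f : forall k, 'cV[R]_(n k) -> R)
  (X : forall k, pred 'cV[R]_(n k)) (rho : R) (k : 'I_K)
  (lamk zk : forall l : 'I_K, 'cV[R]_(m k l)) (xk : 'cV[R]_(n k)) : Prop :=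
  X k xk /\ forall y, X k y -> xobj f rho lamk zk xk <= xobj f rho lamk zk y.

(* One run of the asynchronous ADMM (global view).
   Aset phi = A_phi, phibar phi k = \bar phi_k (for k in A_phi),
   E phi l k = ((l,k) \in E_phi). *)
Definition async_admm_run (f : forall k, 'cV[R]_(n k) -> R)
  (X : forall k, pred 'cV[R]_(n k)) (rho alpha : R)
  (Aset : nat -> {set 'I_K}) (phibar : nat -> 'I_K -> nat)
  (E : nat -> rel 'I_K)
  (x : nat -> forall k : 'I_K, 'cV[R]_(n k))
  (lam z : nat -> forall k l : 'I_K, 'cV[R]_(m k l)) : Prop :=
  (0 < rho /\ 0 <= alpha) /\
      (forall k l, N k l = N l k) /\
      (forall k l, N k l -> lam 0%N k l = 0) /\ in_Z (z 0%N) /\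
      (forall phi k, k \in Aset phi -> (phibar phi k < phi)%N) /\
      (forall phi k, k \in Aset phi ->
         is_argminF f X rho (lam phi k) (z (phibar phi k).+1 k) (x phi.+1 k)
         /\ forall l, N k l -> lam phi.+1 k l =
              lam phi k l + rho *: (Amat k l *m x phi.+1 k - z (phibar phi k).+1 k l)) /\
      (forall phi k, k \notin Aset phi ->
         x phi.+1 k = x phi k /\ forall l, N k l -> lam phi.+1 k l = lam phi k l) /\
      (forall phi k l, N k l ->
         ((k \in Aset phi) && E phi l k ->
               let w := (2 * rho + alpha)^-1 *:
                  (lam phi.+1 k l + swapv (lam phi.+1 l k)
                   + rho *: (Amat k l *m x phi.+1 k)
                   + rho *: swapv (Amat l k *m x phi.+1 l)
                   + alpha *: z phi k l) in
               z phi.+1 k l = w /\ z phi.+1 l k = swapv w)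
         /\ (~~ (((k \in Aset phi) && E phi l k) || ((l \in Aset phi) && E phi k l)) ->
               z phi.+1 k l = z phi k l)).

End ADMM.

(* Main.v *)
Require Import Defs.
From HB Require Import structures.
From mathcomp Require Import all_boot all_order all_algebra.
From mathcomp Require Import zify ring lra.
Import Order.TTheory GRing.Theory Num.Theory.
Local Open Scope ring_scope.

Lemma cs_scalar (R : realFieldType) (I : Type) (r : seq I) (a : I -> R) :
  (\sum_(j <- r) a j) ^+ 2 <= (size r)%:R * \sum_(j <- r) a j ^+ 2.
Proof.
elim: r => [|x r IH]; first by rewrite !big_nil mul0r expr0n.
rewrite !big_cons.
case: r IH => [|y r] IH.
  by rewrite !big_nil !addr0 mul1r.
set S := \sum_(j <- _) a j in IH *; set T := \sum_(j <- _) a j ^+ 2 in IH *.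
set nR := (size (y :: r))%:R in IH *.
have hn : 0 < nR by rewrite /nR ltr0n.
have -> : (size [:: x, y & r])%:R = nR + 1 :> R by rewrite /nR -natr1.
have hT : 0 <= T by rewrite /T sumr_ge0 // => i _; rewrite sqr_ge0.
rewrite -/nR.
suff : 0 <= nR * ((nR + 1) * (a x ^+ 2 + T) - (a x + S) ^+ 2).
  by rewrite pmulr_rge0 // subr_ge0.
have h1 := sqr_ge0 (nR * a x - S).
nra.
Qed.

Lemma sqn_ge0 (R : realFieldType) p (v : 'cV[R]_p) : 0 <= sqn v.
Proof. by rewrite /sqn /dotv sumr_ge0 // => i _; rewrite -expr2 sqr_ge0. Qed.

Lemma sqnN (R : realFieldType) p (v : 'cV[R]_p) : sqn (- v) = sqn v.
Proof. by rewrite /sqn /dotv; apply: eq_bigr => i _; rewrite !mxE mulrNN. Qed.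

Lemma cs_vec (R : realFieldType) p (I : Type) (r : seq I) (v : I -> 'cV[R]_p) :
  sqn (\sum_(j <- r) v j) <= (size r)%:R * \sum_(j <- r) sqn (v j).
Proof.
rewrite /sqn /dotv.
under eq_bigr do rewrite summxE -expr2.
rewrite exchange_big mulr_sumr /=; apply: ler_sum => i _.
under [X in _ <= _ * X]eq_bigr do rewrite -expr2.
exact: cs_scalar.
Qed.

Lemma sum_pred_le (R : realFieldType) a b c d (P Q : pred nat) (F : nat -> R) :
  (forall i, 0 <= F i) ->
  (forall i, (a <= i < b)%N -> P i -> [&& (c <= i)%N, (i < d)%N & Q i]) ->
  \sum_(a <= i < b | P i) F i <= \sum_(c <= i < d | Q i) F i.
Proof.
move=> F0 PQ.
rewrite (big_nat_widenl a 0) // (big_nat_widen 0 b (b+d)) ?leq_addr //.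
rewrite [X in _ <= X](big_nat_widenl c 0) // [X in _ <= X](big_nat_widen 0 d (b+d)) ?leq_addl //.
rewrite big_mkcond [X in _ <= X]big_mkcond /=; apply: ler_sum_nat => i _.
case: ifP => [/andP[/andP[Pi hai] hib]|_]; last by case: ifP.
have /and3P[hc hd Qi] := PQ i (introT andP (conj hai hib)) Pi.
by rewrite Qi hc hd.
Qed.

Theorem lemma2 (R : realFieldType) (K : nat) (n : 'I_K -> nat)
  (m : 'I_K -> 'I_K -> nat) (hm : forall k l, m l k = m k l)
  (N : rel 'I_K) (Amat : forall k l, 'M[R]_(m k l, n k))
  (f : forall k, 'cV[R]_(n k) -> R) (X : forall k, pred 'cV[R]_(n k))
  (rho alpha : R) (Aset : nat -> {set 'I_K}) (phibar : nat -> 'I_K -> nat)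
  (E : nat -> rel 'I_K) (x : nat -> forall k : 'I_K, 'cV[R]_(n k))
  (lam z : nat -> forall k l : 'I_K, 'cV[R]_(m k l))
  (run : async_admm_run hm N Amat f X rho alpha Aset phibar E x lam z)
  (omega : nat) (homega : (0 < omega)%N)
  (hact : forall (k : 'I_K) (nu : nat), (0 < nu)%N ->
     exists phi : nat, (nu.+1 - omega <= phi <= nu)%N /\ k \in Aset phi)
  (hdelay : forall (phi : nat) (k : 'I_K), (0 < phi)%N -> k \in Aset phi ->
     (phi - omega <= phibar phi k < phi)%N)
  (nu : nat) (hnu : (1 <= nu)%N) :
  \sum_(1 <= phi < nu.+1) \sum_(k in Aset phi)
      sqn_blocks N (fun l => z (phibar phi k).+1 k l - z phi k l)
  <= 2 * ((omega - 1)%:R) ^+ 2 *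
     \sum_(1 <= phi < nu.+1) sqn_diff N (z phi.+1) (z phi).
Proof.
pose D j := sqn_diff N (z j.+1) (z j).
have D0 : forall j, 0 <= D j.
  by move=> j; rewrite /D /sqn_diff sumr_ge0 // => k _; rewrite sumr_ge0 // => l _; apply: sqn_ge0.
pose w : R := (omega - 1)%:R.
have w0 : 0 <= w by rewrite /w ler0n.
pose cond phi j := ((phi < j + omega)%N && (j < phi)%N).
have stepA : forall phi, (1 <= phi < nu.+1)%N ->
  \sum_(k in Aset phi) sqn_blocks N (fun l => z (phibar phi k).+1 k l - z phi k l)
  <= w * \sum_(1 <= j < nu.+1 | cond phi j) D j.
  move=> phi /andP[hp1 hp2].
  apply: (@le_trans _ _ (\sum_(k in Aset phi) \sum_(l | N k l)
      w * \sum_(1 <= j < nu.+1 | cond phi j) sqn (z j.+1 k l - z j k l))).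
    apply: ler_sum => k kA.
    have /andP[hb1 hb2] := hdelay phi k hp1 kA.
    rewrite /sqn_blocks; apply: ler_sum => l _.
    have tel : z (phibar phi k).+1 k l - z phi k l
       = - \sum_((phibar phi k).+1 <= j < phi) (z j.+1 k l - z j k l).
      by rewrite (telescope_sumr (fun j => z j k l)) // opprB.
    rewrite tel sqnN; apply: le_trans; first exact: cs_vec.
    rewrite size_iota; apply: ler_pM.
    - by rewrite ler0n.
    - by rewrite sumr_ge0 // => j _; apply: sqn_ge0.
    - rewrite /w ler_nat; lia.
    - apply: sum_pred_le; first by move=> j; apply: sqn_ge0.
      move=> j hj _; rewrite /cond; lia.
  apply: (@le_trans _ _ (\sum_(k : 'I_K) \sum_(l | N k l)
      w * \sum_(1 <= j < nu.+1 | cond phi j) sqn (z j.+1 k l - z j k l))).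
    rewrite [X in _ <= X](bigID (fun k => k \in Aset phi)) /= lerDl.
    rewrite sumr_ge0 // => k _; rewrite sumr_ge0 // => l _.
    by rewrite mulr_ge0 // sumr_ge0 // => j _; apply: sqn_ge0.
  rewrite le_eqVlt; apply/orP; left; apply/eqP.
  rewrite /D /sqn_diff /sqn_blocks.
  under eq_bigr do rewrite -mulr_sumr.
  rewrite -mulr_sumr; congr (w * _).
  rewrite [RHS]exchange_big /=; apply: eq_bigr => k _.
  by rewrite [RHS]exchange_big.
apply: (@le_trans _ _ (\sum_(1 <= phi < nu.+1) w * \sum_(1 <= j < nu.+1 | cond phi j) D j)).
  by rewrite big_nat [X in _ <= X]big_nat; apply: ler_sum => phi; apply: stepA.
rewrite -mulr_sumr.
under eq_bigr do rewrite big_mkcond.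
rewrite exchange_big /=.
under eq_bigr do rewrite -big_mkcond.
apply: (@le_trans _ _ (w * \sum_(1 <= j < nu.+1) (w * D j))).
  apply: ler_wpM2l => //; apply: ler_sum => j _.
  apply: (@le_trans _ _ (\sum_(j.+1 <= phi < j + omega) D j)).
    apply: sum_pred_le => // phi _; rewrite /cond; lia.
  rewrite sumr_const_nat /w -[X in X <= _]mulr_natl; apply: ler_wpM2r => //; rewrite ler_nat; lia.
rewrite -mulr_sumr mulrA -expr2.
have S0 : 0 <= \sum_(1 <= j < nu.+1) D j by rewrite sumr_ge0.
rewrite -/w; apply: ler_wpM2r => //.
have hw2 : 0 <= w ^+ 2 by apply: sqr_ge0.
lra.
Qed.
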